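(* Let $R$ be a finite chain ring, $r\ge1$, $\rho\ge2$, and let $A=\bigcup_{i=1}^lA_i\subseteq R$ be a well-conditioned set partitioned into $l$ pairwise disjoint blocks with $|A_i|=r+\rho-1$, so $n=|A|=l(r+\rho-1)$. Let $g\in R[x]$ be a polynomial of degree $r+\rho-1$ with unit leading coefficient which is constant on each $A_i$. Let $r\mid K$ with $t=K/r\le l$. For $a=(a_{i,j})_{0\le i\le r-1,\,0\le j\le t-1}\in R^K$ let $f_a(x)=\sum_{i=0}^{r-1}\sum_{j=0}^{t-1}a_{i,j}g(x)^jx^i$ and $\mathcal C=\{(f_a(\alpha))_{\alpha\in A}:a\in R^K\}$. Then $\mathcal C$ is a free $R$-linear code of rank $K$, for each $i$ the punctured code $\mathcal C_{A_i}$ has minimum distance at least $\rho$ (so $\mathcal C$ has $(r,\rho)$-locality with respect to the partition $\{A_i\}$; any erased coordinate in $A_i$ is recoverable from any $r$ other coordinates in $A_i$), and $$d\ge n-K+1-\left(\frac{K}{r}-1\right)(\rho-1).$$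
   Context: A finite chain ring is a finite commutative local ring whose ideals are totally ordered by inclusion; $N(R)$ is its unit group. A subset $T\subseteq N(R)$ is subtractive if $a-b\in N(R)$ for all distinct $a,b\in T$. A set $\{a_1,\dots,a_n\}\subseteq R$ is well-conditioned if either it is a subtractive subset of $N(R)$, or for some $i$ the set without $a_i$ is a subtractive subset of $N(R)$ and $a_i$ is a zero divisor (or $0$). A code has $(r,\rho)$-locality if its coordinates are partitioned into sets $B_i$ with $|B_i|\le r+\rho-1$ and each punctured code $C_{B_i}$ has minimum distance at least $\rho$. *)

(* Defs.v *)
From HB Require Import structures.
From mathcomp Require Import all_boot all_order all_algebra.
Set Implicit Arguments. Unset Strict Implicit. Unset Printing Implicit Defensive.
Import Order.TTheory GRing.Theory Num.Theory.
Local Open Scope ring_scope.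

Section ChainRing.
Variable R : finComUnitRingType.

Definition is_ideal (I : {set R}) : bool :=
  [&& (0 \in I), [forall x in I, forall y in I, x + y \in I]
    & [forall x in I, forall y : R, y * x \in I]].

Definition local_ring : Prop := is_ideal [set x : R | x \isn't a GRing.unit].

Definition ideals_chain : Prop :=
  forall I J : {set R}, is_ideal I -> is_ideal J -> I \subset J \/ J \subset I.

Definition finite_chain_ring : Prop := local_ring /\ ideals_chain.

Definition subtractive (T : {set R}) : Prop :=
  (forall a, a \in T -> a \is a GRing.unit) /\
  (forall a b, a \in T -> b \in T -> a != b -> (a - b) \is a GRing.unit).

(* zero divisor (includes 0, as R is nontrivial) *)
Definition zero_divisor (a : R) : Prop := exists b : R, b != 0 /\ a * b = 0.

Definition well_conditioned (A : {set R}) : Prop :=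
  subtractive A \/ exists2 a, a \in A & subtractive (A :\ a) /\ zero_divisor a.

Definition f_eval (r t : nat) (g : {poly R}) (a : 'M[R]_(r, t)) (x : R) : R :=
  \sum_(i < r) \sum_(j < t) a i j * g.[x] ^+ j * x ^+ i.

(* Words of length |A| are represented as functions R -> R vanishing outside A;
   coordinate alpha in A is the value at alpha. *)
Definition code (A : {set R}) (r t : nat) (g : {poly R}) : {set {ffun R -> R}} :=
  [set [ffun x => if x \in A then f_eval g a x else 0] | a : 'M[R]_(r, t)].

Definition hdist (B : {set R}) (w w' : {ffun R -> R}) : nat :=
  #|[set x in B | w x != w' x]|.

Definition punct_min_dist_ge (C : {set {ffun R -> R}}) (B : {set R}) (m : nat) : Prop :=
  forall w w', w \in C -> w' \in C -> (exists2 x, x \in B & w x != w' x) ->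
    (m <= hdist B w w')%N.

Definition min_dist_ge (C : {set {ffun R -> R}}) (A : {set R}) (m : int) : Prop :=
  forall w w', w \in C -> w' \in C -> w != w' -> m <= (hdist A w w')%:Z.

Definition free_of_rank (C : {set {ffun R -> R}}) (K : nat) : Prop :=
  exists b : 'I_K -> {ffun R -> R},
    (forall w, w \in C <-> exists lam : 'I_K -> R,
                 forall x, w x = \sum_(k < K) lam k * b k x) /\
    (forall lam : 'I_K -> R,
        (forall x, \sum_(k < K) lam k * b k x = 0) -> forall k, lam k = 0).

End ChainRing.

(* Main.v *)
Require Import Defs.
From HB Require Import structures.
From mathcomp Require Import all_boot all_order all_algebra.
From mathcomp Require Import zify ring.
Import Order.TTheory GRing.Theory Num.Theory.
Set Implicit Arguments. Unset Strict Implicit. Unset Printing Implicit Defensive.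
Local Open Scope ring_scope.

Lemma zd_nonunit (R : finComUnitRingType) (a : R) : zero_divisor a -> a \isn't a GRing.unit.
Proof.
case=> b [nb ab]; apply/negP => ua; move/negP: nb; apply.
by rewrite -(mulKr ua b) ab mulr0.
Qed.

Lemma wc_diff (R : finComUnitRingType) (A : {set R}) :
  local_ring R -> well_conditioned A ->
  forall x y, x \in A -> y \in A -> x != y -> (x - y) \is a GRing.unit.
Proof.
rewrite /local_ring /is_ideal => /and3P[_ /forallP hadd /forallP hmul].
have Hadd (u v : R) : u \isn't a GRing.unit -> v \isn't a GRing.unit -> u + v \isn't a GRing.unit.
  move=> hu hv; have := hadd u; rewrite inE hu /= => /forallP /(_ v).
  by rewrite !inE hv.
have Hmul (u v : R) : u \isn't a GRing.unit -> v * u \isn't a GRing.unit.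
  move=> hu; have := hmul u; rewrite inE hu /= => /forallP /(_ v).
  by rewrite !inE.
case=> [[_ hs]|[a aA [[hu hs] za]]] x y xA yA xy; first exact: hs.
have na := @zd_nonunit R a za.
have [xa|xa] := eqVneq x a; have [ya|ya] := eqVneq y a.
- by move: xy; rewrite xa ya eqxx.
- subst x; have yu : y \is a GRing.unit by apply: hu; rewrite !inE ya.
  apply/negPn/negP => h.
  have := Hadd _ _ na (Hmul _ (-1) h).
  by rewrite mulN1r opprB addrC subrK yu.
- subst y; have xu : x \is a GRing.unit by apply: hu; rewrite !inE xa.
  apply/negPn/negP => h.
  by have := Hadd _ _ na h; rewrite addrC subrK xu.
- by apply: hs => //; rewrite !inE ?xa ?ya.
Qed.

Lemma uniq_roots_of (R : finComUnitRingType) (S : {set R}) (s : seq R) :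
  (forall x y, x \in S -> y \in S -> x != y -> (x - y) \is a GRing.unit) ->
  uniq s -> all (mem S) s -> uniq_roots s.
Proof.
move=> hS; elim: s => [|x s IH] //= /andP[xs us] /andP[xS aS].
rewrite IH // andbT; apply/allP => y ys.
rewrite /diff_roots mulrC eqxx /=; apply: hS => //.
  by move/allP: aS; apply.
by apply/eqP => yx; move: xs; rewrite -yx ys.
Qed.

Lemma few_roots (R : finComUnitRingType) (S : {set R}) (p : {poly R}) :
  (forall x y, x \in S -> y \in S -> x != y -> (x - y) \is a GRing.unit) ->
  p != 0 -> (#|[set x in S | p.[x] == 0%R]| < size p)%N.
Proof.
move=> hS p0; rewrite cardE; apply: max_ring_poly_roots => //.
  by apply/allP => x; rewrite mem_enum inE => /andP[_ /eqP h]; apply/eqP.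
apply: uniq_roots_of hS _ _; first exact: enum_uniq.
by apply/allP => x; rewrite mem_enum inE => /andP[].
Qed.

Lemma weight_lb (R : finComUnitRingType) (S : {set R}) (p : {poly R}) :
  (forall x y, x \in S -> y \in S -> x != y -> (x - y) \is a GRing.unit) ->
  p != 0 -> (#|S| < #|[set x in S | p.[x] != 0%R]| + size p)%N.
Proof.
move=> hS p0; have h := few_roots hS p0.
rewrite -(cardsID [set x | p.[x] == 0%R] S).
have -> : S :&: [set x | p.[x] == 0%R] = [set x in S | p.[x] == 0%R].
  by apply/setP => x; rewrite !inE.
have -> : S :\: [set x | p.[x] == 0%R] = [set x in S | p.[x] != 0%R].
  by apply/setP => x; rewrite !inE andbC.
lia.
Qed.

Lemma card_union (R : finType) (l : nat) (B : 'I_l -> {set R}) :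
  (forall i j : 'I_l, i != j -> [disjoint B i & B j]) ->
  #|\bigcup_(i < l) B i| = (\sum_(i < l) #|B i|)%N.
Proof.
move=> hd; rewrite -sum1_card (partition_disjoint_bigcup _ _ hd).
by apply: eq_bigr => i _; rewrite sum1_card.
Qed.
Definition colp (R : finComUnitRingType) r t (a : 'M[R]_(r,t)) (j : 'I_t) : {poly R} :=
  \sum_(i < r) a i j *: 'X^i.
Definition Pa (R : finComUnitRingType) r t (g : {poly R}) (a : 'M[R]_(r,t)) : {poly R} :=
  \sum_(j < t) colp a j * g ^+ j.
Definition Qc (R : finComUnitRingType) r t (a : 'M[R]_(r,t)) (c : R) : {poly R} :=
  \sum_(i < r) (\sum_(j < t) a i j * c ^+ j) *: 'X^i.

Lemma Pa_eval (R : finComUnitRingType) r t (g : {poly R}) (a : 'M[R]_(r,t)) x :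
  (Pa g a).[x] = f_eval g a x.
Proof.
rewrite /Pa /f_eval horner_sum.
under eq_bigr do rewrite hornerM horner_exp /colp horner_sum mulr_suml.
rewrite exchange_big /=; apply: eq_bigr => i _; apply: eq_bigr => j _.
by rewrite hornerZ hornerXn mulrAC.
Qed.

Lemma Qc_eval (R : finComUnitRingType) r t (g : {poly R}) (a : 'M[R]_(r,t)) x c :
  g.[x] = c -> (Qc a c).[x] = f_eval g a x.
Proof.
move=> gx; rewrite /Qc /f_eval horner_sum; apply: eq_bigr => i _.
by rewrite hornerZ hornerXn mulr_suml gx.
Qed.

Lemma size_sum_le (R : finComUnitRingType) (I : finType) (F : I -> {poly R}) N :
  (forall i, size (F i) <= N)%N -> (size (\sum_i F i)%R <= N)%N.
Proof.
move=> h; apply: (big_ind (fun p : {poly R} => size p <= N)%N) => //.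
  by rewrite size_poly0.
move=> p q hp hq; apply: leq_trans (size_polyD _ _) _; by rewrite geq_max hp hq.
Qed.

Lemma size_monos (R : finComUnitRingType) r (c : 'I_r -> R) :
  (size (\sum_(i < r) c i *: 'X^i)%R <= r)%N.
Proof.
apply: size_sum_le => i; apply: leq_trans (size_scale_leq _ _) _.
by rewrite size_polyXn.
Qed.

Lemma size_Qc (R : finComUnitRingType) r t (a : 'M[R]_(r,t)) c : (size (Qc a c) <= r)%N.
Proof. exact: size_monos. Qed.

Lemma size_Pa (R : finComUnitRingType) r t (g : {poly R}) (a : 'M[R]_(r,t)) :
  (size (Pa g a) <= r + (size g).-1 * t.-1)%N.
Proof.
apply: size_sum_le => j; apply: leq_trans (size_polyMleq _ _) _.
have h1 := size_monos (fun i => a i j).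
have h2 := size_poly_exp_leq g j.
have hj : (j <= t.-1)%N by have := ltn_ord j; lia.
have h3 : ((size g).-1 * j <= (size g).-1 * t.-1)%N by apply: leq_mul.
rewrite /colp; move: h1 h2 h3; set u := size _; set v := size _; set w := ((size g).-1 * t.-1)%N; set z := ((size g).-1 * j)%N; move=> h1 h2 h3; clearbody u v w z; lia.
Qed.

Lemma indep_ord (R : finComUnitRingType) r (g : {poly R}) :
  (r < size g)%N -> lead_coef g \is a GRing.unit ->
  forall t (F : 'I_t -> {poly R}), (forall j, size (F j) <= r)%N ->
  \sum_(j < t) F j * g ^+ j = 0 -> forall j, F j = 0.
Proof.
move=> hg ug; elim=> [|t IH] F hF; first by move=> _ [].
rewrite big_ord_recl expr0 mulr1.
set Q := \sum_(j < t) F (lift ord0 j) * g ^+ j.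
have -> : \sum_(i < t) F (lift ord0 i) * g ^+ (bump 0 i) = g * Q.
  rewrite /Q mulr_sumr; apply: eq_bigr => i _.
  by rewrite /bump /= add1n exprS mulrCA.
move=> hs.
have Q0 : Q = 0.
  apply/eqP; apply/negPn/negP => nQ.
  have hl : lead_coef g * lead_coef Q != 0.
    apply/negP => /eqP h; move/negP: nQ; apply.
    rewrite -lead_coef_eq0; apply/eqP; apply: (mulrI ug); by rewrite h mulr0.
  have := hF ord0; have -> : F ord0 = - (g * Q) by apply/eqP; rewrite -addr_eq0 hs.
  rewrite size_polyN size_proper_mul //.
  have : (0 < size Q)%N by rewrite size_poly_gt0.
  move: hg; set u := size g; set v := size Q; clearbody u v; lia.
move: hs; rewrite Q0 mulr0 addr0 => h0 j.
case: (unliftP ord0 j) => [j'|] ->; last exact: h0.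
apply: (IH (fun j => F (lift ord0 j))) => //.
Qed.

Lemma coef_colp (R : finComUnitRingType) r t (a : 'M[R]_(r,t)) j (i : 'I_r) :
  (colp a j)`_i = a i j.
Proof.
rewrite /colp coef_sum (bigD1 i) //= coefZ coefXn eqxx mulr1 big1 ?addr0 //.
move=> k ki; rewrite coefZ coefXn.
have -> : (nat_of_ord i == nat_of_ord k) = false by apply/negbTE; rewrite eq_sym.
by rewrite mulr0.
Qed.

Definition word (R : finComUnitRingType) (A : {set R}) r t (g : {poly R}) (a : 'M[R]_(r,t)) :=
  [ffun x => if x \in A then f_eval g a x else 0].

Lemma in_code (R : finComUnitRingType) (A : {set R}) r t (g : {poly R}) w :
  w \in code A r t g -> exists a : 'M[R]_(r,t), w = word A g a.
Proof. by case/imsetP => a _ ->; exists a. Qed.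

Lemma word_in (R : finComUnitRingType) (A : {set R}) r t (g : {poly R}) (a : 'M[R]_(r,t)) :
  word A g a \in code A r t g.
Proof. by apply/imsetP; exists a. Qed.

Unset Implicit Arguments.

Theorem mainTheorem12 (R : finComUnitRingType) (r rho l K : nat)
  (A : {set R}) (B : 'I_l -> {set R}) (g : {poly R}) :
  finite_chain_ring R ->
  (1 <= r)%N -> (2 <= rho)%N ->
  well_conditioned A ->
  A = \bigcup_(i < l) B i ->
  (forall i j : 'I_l, i != j -> [disjoint B i & B j]) ->
  (forall i : 'I_l, #|B i| = (r + rho - 1)%N) ->
  size g = (r + rho)%N ->
  lead_coef g \is a GRing.unit ->
  (forall i : 'I_l, forall x y, x \in B i -> y \in B i -> g.[x] = g.[y]) ->
  (r %| K)%N -> (K %/ r <= l)%N ->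
  let t := (K %/ r)%N in
  let n := #|A| in
  let C := code A r t g in
  free_of_rank C K /\
  (forall i : 'I_l, punct_min_dist_ge C (B i) rho) /\
  min_dist_ge C A (n%:Z - K%:Z + 1 - (t%:Z - 1) * (rho%:Z - 1)).
Proof.
move=> [hloc _] hr hrho hwc hA hdisj hcard hsg hlead hgc hrK htl t n C.
have hdiff := wc_diff hloc hwc.
have hBA i : B i \subset A by rewrite hA; apply/subsetP => x xB; apply/bigcupP; exists i.
have hKt : K = (t * r)%N by rewrite /t divnK.
have hn : n = (l * (r + rho - 1))%N.
  rewrite /n hA card_union //.
  under eq_bigr do rewrite hcard.
  by rewrite sum_nat_const card_ord.
split; last split.
- pose T := ('I_r * 'I_t)%type.
  have hK : #|{: T}| = K by rewrite card_prod !card_ord hKt mulnC.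
  pose phi (k : 'I_K) : T := enum_val (cast_ord (esym hK) k).
  pose psi (q : T) : 'I_K := cast_ord hK (enum_rank q).
  have phiK : cancel phi psi by move=> k; rewrite /phi /psi enum_valK cast_ordKV.
  have psiK : cancel psi phi by move=> q; rewrite /phi /psi cast_ordK enum_rankK.
  pose bw (k : 'I_K) : {ffun R -> R} :=
    [ffun x => if x \in A then g.[x] ^+ (phi k).2 * x ^+ (phi k).1 else 0].
  pose M (lam : 'I_K -> R) : 'M[R]_(r,t) := \matrix_(i, j) lam (psi (i, j)).
  have key : forall lam x, \sum_(k < K) lam k * bw k x = word A g (M lam) x.
    move=> lam x; rewrite /word ffunE; case: ifP => xA.
    - rewrite /f_eval; symmetry.
      under eq_bigr do under eq_bigr do rewrite mxE.
      rewrite pair_bigA (reindex phi) /=; last by apply: onW_bij; exists psi.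
      apply: eq_bigr => k _; rewrite ffunE xA.
      have -> : ((phi k).1, (phi k).2) = phi k by case: (phi k).
      by rewrite phiK mulrA.
    - by apply: big1 => k _; rewrite ffunE xA mulr0.
  exists bw; split.
  + move=> w; split.
    * move=> /in_code [a ->]; exists (fun k => a (phi k).1 (phi k).2) => x.
      rewrite key; congr (word A g _ x); apply/matrixP => i j.
      by rewrite mxE psiK.
    * case=> lam hw; have -> : w = word A g (M lam).
        by apply/ffunP => x; rewrite hw key.
      exact: word_in.
  + move=> lam h0 k.
    have hz : forall x, x \in A -> (Pa g (M lam)).[x] = 0.
      by move=> x xA; rewrite Pa_eval; move: (h0 x); rewrite key /word ffunE xA.
    have tpos : (0 < t)%N.
      rewrite lt0n; apply/eqP => t0; by have := ltn_ord k; rewrite {2}hKt t0 mul0n ltn0.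
    have P0 : Pa g (M lam) = 0.
      apply/eqP/negPn/negP => nz; have := weight_lb hdiff nz.
      have -> : #|[set x in A | (Pa g (M lam)).[x] != 0%R]| = 0%N.
        apply/eqP; rewrite cards_eq0; apply/eqP/setP => x; rewrite !inE.
        by case xA: (x \in A) => //=; rewrite hz // eqxx.
      have := size_Pa g (M lam); rewrite hsg -/n hn.
      set v := size _; clearbody v; move: htl tpos hr hrho; rewrite -/t.
      clear; nia.
    have hF := indep_ord (r:=r) (g:=g) _ hlead (F := colp (M lam)).
    have hk : lam k = M lam (phi k).1 (phi k).2.
      rewrite /M mxE. have -> : ((phi k).1, (phi k).2) = phi k by case: (phi k).
      by rewrite phiK.
    rewrite hk -coef_colp hF ?coef0 //.
    * by rewrite hsg; lia.
    * by move=> j; apply: size_monos.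
- move=> i w w' /in_code [a ->] /in_code [a' ->] [x0 x0B hx0].
  set c := g.[x0].
  set p := Qc a c - Qc a' c.
  have hBi : forall x, x \in B i -> word A g a x - word A g a' x = p.[x].
    move=> x xB; have xA : x \in A by apply: (subsetP (hBA i)).
    rewrite !ffunE xA /p hornerD hornerN !(Qc_eval _ (hgc i x x0 xB x0B)) //.
  have p0 : p != 0.
    apply/negP => /eqP p0; move: hx0; rewrite -subr_eq0 hBi // p0 horner0 eqxx //.
  have hdB : forall x y, x \in B i -> y \in B i -> x != y -> (x - y) \is a GRing.unit.
    by move=> x y xB yB; apply: hdiff; apply: (subsetP (hBA i)).
  have hw := weight_lb hdB p0.
  have hs : (size p <= r)%N.
    apply: leq_trans (size_polyD _ _) _; rewrite size_polyN geq_max !size_Qc //.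
  have -> : hdist (B i) (word A g a) (word A g a') = #|[set x in B i | p.[x] != 0%R]|.
    rewrite /hdist; apply: eq_card => x; rewrite !inE.
    case xB: (x \in B i) => //=; by rewrite -subr_eq0 hBi.
  move: hw; rewrite hcard; set u := #|_|; clearbody u; move: hs hrho; set v := size p; clearbody v; lia.
- move=> w w' /in_code [a ->] /in_code [a' ->] hne.
  set p := Pa g a - Pa g a'.
  have hAx : forall x, x \in A -> word A g a x - word A g a' x = p.[x].
    by move=> x xA; rewrite !ffunE xA /p hornerD hornerN !Pa_eval.
  have [x0 hx0] : exists x0, word A g a x0 != word A g a' x0.
    apply/existsP; apply: contraR hne => /existsPn h; apply/eqP/ffunP => x.
    by apply/eqP; move: (h x); rewrite negbK.
  have x0A : x0 \in A.
    by apply: contraR hx0 => xA; rewrite !ffunE (negbTE xA).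
  have p0 : p != 0.
    apply/negP => /eqP p0; move: hx0; rewrite -subr_eq0 hAx // p0 horner0 eqxx //.
  have hw := weight_lb hdiff p0.
  have -> : hdist A (word A g a) (word A g a') = #|[set x in A | p.[x] != 0%R]|.
    rewrite /hdist; apply: eq_card => x; rewrite !inE.
    case xA: (x \in A) => //=; by rewrite -subr_eq0 hAx.
  have hs : (size p <= r + (size g).-1 * t.-1)%N.
    apply: leq_trans (size_polyD _ _) _; rewrite size_polyN geq_max !size_Pa //.
  have [t0|tpos] := eqVneq t 0%N.
    have hP (b : 'M[R]_(r,t)) : Pa g b = 0.
      by apply: big1 => j _; have := ltn_ord j; rewrite {2}t0.
    by move: p0; rewrite /p !hP subrr eqxx.
  move: hw; rewrite -/n; set u := #|_|; clearbody u; move: hs; rewrite hsg.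
  set v := size p; clearbody v; move=> hs hw.
  move: hKt hs hw tpos hrho; clearbody t; move=> -> hs hw tpos hrho0.
  have ht : t = (t.-1).+1 by rewrite prednK // lt0n.
  move: hs; rewrite ht; set s := t.-1; clearbody s; move=> hs.
  have h2 : (n + s < u + r + s * r + s * rho)%N by move: hs hw; nia.
  have e1 : (Posz s.+1 - 1 = Posz s)%R by rewrite -addn1 PoszD addrK.
  rewrite e1 mulSn mulrBr mulr1 -!PoszM PoszD.
  move: h2; set sr := (s * r)%N; set srho := (s * rho)%N; clearbody sr srho => h2.
  lia.
Qed.
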